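(* (1) For $s\in\{0,1,\dots,\lfloor\frac{k_0-2}{2}\rfloor\}$ with $s':=k_0-1-s\le p-2$, we have $G^{(s),\dagger}(w,t)=G^{(s'),\dagger}(w,t)$ in $\mathbb Z_p[w][[t]]$. (2) For $s\in\{k_0,\dots,\lfloor\frac{k_0-2+p-1}{2}\rfloor\}$ and $s'':=k_0-1-s+p-1$, we have $G^{(s),\dagger}(w,t)=G^{(s''),\dagger}(w,t)$ in $\mathbb Z_p[w][[t]]$.
   Context: Fix a prime $p\ge7$ and $k_0\in\{2,\dots,p\}$. $\{n\}$ is the residue of $n$ mod $p-1$ in $\{0,\dots,p-2\}$. $\mathcal K=\{k\ge2:k\equiv k_0\pmod{p-1}\}$, $k_\bullet=(k-k_0)/(p-1)$. For $s\in\{0,\dots,p-2\}$: $a_s=\{k_0-2-2s\}$, $\delta_s=\lfloor\frac{s+\{a_s+s\}}{p-1}\rfloor$; if $a_s+s<p-1$, $t_1^{(s)}=s+\delta_s$, $t_2^{(s)}=a_s+s+\delta_s+2$; otherwise $t_1^{(s)}=\{a_s+s\}+\delta_s+1$, $t_2^{(s)}=s+\delta_s+1$. For $k\in\mathcal K$: $d_k^{ur}(s)=\lfloor\frac{k_\bullet-t_1^{(s)}}{p+1}\rfloor+\lfloor\frac{k_\bullet-t_2^{(s)}}{p+1}\rfloor+2$, $d_k^{ur,\dagger}(s)=d_k^{ur}(s)+\delta_s$, $d_k^{Iw,\dagger}=2k_\bullet+2$. Set $m_n^{(s),\dagger}(k)=\min\{n-d_k^{ur,\dagger}(s),\,d_k^{Iw,\dagger}-d_k^{ur,\dagger}(s)-n\}$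 if $d_k^{ur,\dagger}(s)<n<d_k^{Iw,\dagger}-d_k^{ur,\dagger}(s)$, else $0$; $w_k=\exp((k-2)p)-1$; $g_n^{(s),\dagger}(w)=\prod_{k\in\mathcal K}(w-w_k)^{m_n^{(s),\dagger}(k)}$; $G^{(s),\dagger}(w,t)=\sum_{n\ge0}g_n^{(s),\dagger}(w)t^n$. *)

(* Defs.v *)
From mathcomp Require Import all_boot all_order all_algebra.
Set Implicit Arguments. Unset Strict Implicit. Unset Printing Implicit Defensive.
Import Order.TTheory GRing.Theory Num.Theory.
Local Open Scope ring_scope.

Definition resid (p : nat) (x : int) : int := (x %% (p.-1)%:Z)%Z.

Definition a_s (p k0 s : nat) : int := resid p (k0%:Z - 2 - 2 * s%:Z).

Definition delta_s (p k0 s : nat) : int :=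
  ((s%:Z + resid p (a_s p k0 s + s%:Z)) %/ (p.-1)%:Z)%Z.

Definition t1 (p k0 s : nat) : int :=
  if a_s p k0 s + s%:Z < (p.-1)%:Z then s%:Z + delta_s p k0 s
  else resid p (a_s p k0 s + s%:Z) + delta_s p k0 s + 1.

Definition t2 (p k0 s : nat) : int :=
  if a_s p k0 s + s%:Z < (p.-1)%:Z then a_s p k0 s + s%:Z + delta_s p k0 s + 2
  else s%:Z + delta_s p k0 s + 1.

(* For k in K we write k = k0 + (p-1) j, so that k_bullet = j (a natural number). *)
Definition d_ur (p k0 s j : nat) : int :=
  ((j%:Z - t1 p k0 s) %/ (p.+1)%:Z)%Z + ((j%:Z - t2 p k0 s) %/ (p.+1)%:Z)%Z + 2.

Definition d_ur_dag (p k0 s j : nat) : int := d_ur p k0 s j + delta_s p k0 s.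

Definition d_Iw_dag (j : nat) : int := 2 * j%:Z + 2.

Definition mult (p k0 s n j : nat) : nat :=
  if (d_ur_dag p k0 s j < n%:Z) && (n%:Z < d_Iw_dag j - d_ur_dag p k0 s j)
  then absz (Num.min (n%:Z - d_ur_dag p k0 s j) (d_Iw_dag j - d_ur_dag p k0 s j - n%:Z))
  else 0%N.

(* Only finitely many k have m_n(k) <> 0 (for s <= p-2); the product over K
   is taken over k_bullet < gbound p s n, which contains all of them. *)
Definition gbound (p s n : nat) : nat := ((p.+1) * n.+1 + 2 * p + 2 * s + 4)%N.

Definition g_n (R : comNzRingType) (w : nat -> R) (p k0 s n : nat) : {poly R} :=
  \prod_(j < gbound p s n)
     ('X - (w (k0 + p.-1 * j)%N)%:P) ^+ mult p k0 s n j.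

(* G^{(s),dagger}(w,t) as its coefficient sequence in t *)
Definition G_dag (R : comNzRingType) (w : nat -> R) (p k0 s : nat) : nat -> {poly R} :=
  fun n => g_n w p k0 s n.

From mathcomp Require Import zify.
Lemma mult_beyond_bound (p k0 s n j : nat) :
  (2 <= p)%N -> (gbound p s n <= j)%N -> mult p k0 s n j = 0%N.
Proof.
move=> p2 hj.
have hp1 : (0 < (p.-1)%:Z)%R by rewrite ltz_nat; lia.
have hpn : (p.-1)%:Z != 0 by rewrite gt_eqF.
have ha0 : 0 <= a_s p k0 s by rewrite /a_s /resid modz_ge0.
have ha1 : a_s p k0 s < (p.-1)%:Z by rewrite /a_s /resid ltz_pmod.
have hr0 : 0 <= resid p (a_s p k0 s + s%:Z) by rewrite /resid modz_ge0.
have hr1 : resid p (a_s p k0 s + s%:Z) < (p.-1)%:Z by rewrite /resid ltz_pmod.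
have hd0 : 0 <= delta_s p k0 s by rewrite /delta_s divz_ge0 //; lia.
have hd1 := lez_floor (s%:Z + resid p (a_s p k0 s + s%:Z)) hpn.
rewrite -/(delta_s p k0 s) in hd1.
have hd2 : delta_s p k0 s <= s%:Z + resid p (a_s p k0 s + s%:Z) by nia.
have ht1 : t1 p k0 s <= (2 * p + 2 * s)%N%:Z.
  rewrite /t1; case: ifP => _; lia.
have ht2 : t2 p k0 s <= (2 * p + 2 * s)%N%:Z.
  rewrite /t2; case: ifP => _; lia.
have hj' : ((p.+1) * n.+1 + 2 * p + 2 * s + 4 <= j)%N by [].
have f1 : n.+1%:Z <= ((j%:Z - t1 p k0 s) %/ (p.+1)%:Z)%Z.
  rewrite lez_divRL ?ltz_nat //; nia.
have f2 : n.+1%:Z <= ((j%:Z - t2 p k0 s) %/ (p.+1)%:Z)%Z.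
  rewrite lez_divRL ?ltz_nat //; nia.
rewrite /mult /d_ur_dag /d_ur; case: ifP => // /andP [h _]; lia.
Qed.

(* Main.v *)
Require Import Defs.
From mathcomp Require Import all_boot all_order all_algebra.
From mathcomp Require Import zify ring.
From Stdlib Require Import FunctionalExtensionality.
Set Implicit Arguments. Unset Strict Implicit. Unset Printing Implicit Defensive.
Import Order.TTheory GRing.Theory Num.Theory.
Local Open Scope ring_scope.

Lemma modz_char (x y c d : int) : 0 <= y < d -> x = c * d + y -> (x %% d)%Z = y.
Proof. move=> hy ->; rewrite modzMDl modz_small //. Qed.

Lemma divz_char (x y c d : int) : 0 <= y < d -> x = c * d + y -> (x %/ d)%Z = c.
Proof.
move=> /andP[h0 h1] ->; rewrite divzMDl ?divz_small ?addr0 //.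
  by rewrite h0 /=; have -> : (`|d|%N : int) = d by apply: gez0_abs; lia.
by apply/negP => /eqP e; lia.
Qed.

Lemma g_n_ext (R : comNzRingType) (w : nat -> R) p k0 s n N :
  (2 <= p)%N -> (gbound p s n <= N)%N ->
  g_n w p k0 s n = \prod_(j < N) ('X - (w (k0 + p.-1 * j)%N)%:P) ^+ mult p k0 s n j.
Proof.
move=> p2 hN; rewrite /g_n.
set F := fun j : nat => ('X - (w (k0 + p.-1 * j)%N)%:P) ^+ mult p k0 s n j.
have E1 : forall M, \prod_(j < M) ('X - (w (k0 + p.-1 * j)%N)%:P) ^+ mult p k0 s n j
   = \prod_(0 <= j < M) F j by move=> M; rewrite big_mkord.
rewrite !E1.
rewrite (big_cat_nat (leq0n _) hN) /= [X in _ = _ * X]big_nat_cond [X in _ = _ * X]big1 ?mulr1 //.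
by move=> j /andP[/andP[hj _] _]; rewrite /F mult_beyond_bound // expr0.
Qed.

Lemma G_eq (R : comNzRingType) (w : nat -> R) p k0 s s' : (2 <= p)%N ->
  (forall j, d_ur_dag p k0 s j = d_ur_dag p k0 s' j) ->
  G_dag w p k0 s = G_dag w p k0 s'.
Proof.
move=> p2 hd; apply: functional_extensionality => n.
rewrite /G_dag (@g_n_ext _ _ _ _ _ _ (maxn (gbound p s n) (gbound p s' n))) ?leq_maxl //.
rewrite (@g_n_ext _ _ _ _ s' _ (maxn (gbound p s n) (gbound p s' n))) ?leq_maxr //.
by apply: eq_bigr => j _; rewrite /mult hd.
Qed.

Lemma dud_form p k0 s j (T1 T2 D : int) :
  t1 p k0 s = T1 -> t2 p k0 s = T2 -> delta_s p k0 s = D ->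
  d_ur_dag p k0 s j = ((j%:Z - T1) %/ (p.+1)%:Z)%Z + ((j%:Z - T2) %/ (p.+1)%:Z)%Z + 2 + D.
Proof. by move=> h1 h2 h3; rewrite /d_ur_dag /d_ur h1 h2 h3. Qed.

Lemma L1a p k0 s : (2 <= p)%N -> (2 <= k0 <= p)%N -> (2 * s <= k0 - 2)%N ->
  [/\ t1 p k0 s = s%:Z, t2 p k0 s = k0%:Z - s%:Z & delta_s p k0 s = 0].
Proof.
move=> p2 hk hs.
have ha : a_s p k0 s = k0%:Z - 2 - 2 * s%:Z by rewrite /a_s /resid; apply: (@modz_char _ _ 0); lia.
have hr : resid p (a_s p k0 s + s%:Z) = k0%:Z - 2 - s%:Z by rewrite ha /resid; apply: (@modz_char _ _ 0); lia.
have hd : delta_s p k0 s = 0 by rewrite /delta_s hr; apply: (@divz_char _ (k0%:Z - 2)); lia.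
by split=> //; rewrite /t1 /t2 ?hr hd ha; case: ifP => [h|/negbT h]; lia.
Qed.

Lemma L1b p k0 s : (2 <= p)%N -> (2 <= k0 <= p)%N -> (2 * s <= k0 - 2)%N -> (1 <= s)%N ->
  [/\ t1 p k0 (k0 - 1 - s) = s%:Z, t2 p k0 (k0 - 1 - s) = k0%:Z - s%:Z
    & delta_s p k0 (k0 - 1 - s) = 0].
Proof.
move=> p2 hk hs hs1; set s' := (k0 - 1 - s)%N.
have ha : a_s p k0 s' = 2 * s%:Z - k0%:Z + (p.-1)%:Z by rewrite /a_s /resid; apply: (@modz_char _ _ (-1)); lia.
have hr : resid p (a_s p k0 s' + s'%:Z) = s%:Z - 1 by rewrite ha /resid; apply: (@modz_char _ _ 1); lia.
have hd : delta_s p k0 s' = 0 by rewrite /delta_s hr; apply: (@divz_char _ (k0%:Z - 2)); lia.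
by split=> //; rewrite /t1 /t2 ?hr hd ha; case: ifP => [h|/negbT h]; lia.
Qed.

Lemma L1c p k0 : (2 <= p)%N -> (2 <= k0 < p)%N ->
  [/\ t1 p k0 (k0 - 1) = k0%:Z, t2 p k0 (k0 - 1) = (p.+1)%:Z
    & delta_s p k0 (k0 - 1) = 1].
Proof.
move=> p2 hk; set s' := (k0 - 1)%N.
have ha : a_s p k0 s' = (p.-1)%:Z - k0%:Z by rewrite /a_s /resid; apply: (@modz_char _ _ (-1)); lia.
have hr : resid p (a_s p k0 s' + s'%:Z) = (p.-1)%:Z - 1 by rewrite ha /resid; apply: (@modz_char _ _ 0); lia.
have hd : delta_s p k0 s' = 1 by rewrite /delta_s hr; apply: (@divz_char _ (k0%:Z - 2)); lia.
by split=> //; rewrite /t1 /t2 ?hr hd ha; case: ifP => [h|/negbT h]; lia.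
Qed.

Lemma L2a p k0 s : (2 <= p)%N -> (2 <= k0 <= p)%N -> (k0 <= s)%N -> (2 * s <= k0 - 2 + (p - 1))%N ->
  [/\ t1 p k0 s = s%:Z + 1, t2 p k0 s = k0%:Z + p%:Z - s%:Z & delta_s p k0 s = 1].
Proof.
move=> p2 hk hs hs2.
have ha : a_s p k0 s = k0%:Z - 2 - 2 * s%:Z + (p.-1)%:Z by rewrite /a_s /resid; apply: (@modz_char _ _ (-1)); lia.
have hr : resid p (a_s p k0 s + s%:Z) = k0%:Z - 2 - s%:Z + (p.-1)%:Z by rewrite ha /resid; apply: (@modz_char _ _ 0); lia.
have hd : delta_s p k0 s = 1 by rewrite /delta_s hr; apply: (@divz_char _ (k0%:Z - 2)); lia.
by split=> //; rewrite /t1 /t2 ?hr hd ha; case: ifP => [h|/negbT h]; lia.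
Qed.

Lemma L2b p k0 s : (2 <= p)%N -> (2 <= k0 <= p)%N -> (k0 <= s)%N -> (2 * s <= k0 - 2 + (p - 1))%N ->
  [/\ t1 p k0 (k0 + (p - 1) - 1 - s) = s%:Z + 1,
      t2 p k0 (k0 + (p - 1) - 1 - s) = k0%:Z + p%:Z - s%:Z
    & delta_s p k0 (k0 + (p - 1) - 1 - s) = 1].
Proof.
move=> p2 hk hs hs2; set s' := (k0 + (p - 1) - 1 - s)%N.
have ha : a_s p k0 s' = 2 * s%:Z - k0%:Z by rewrite /a_s /resid; apply: (@modz_char _ _ (-2)); lia.
have hr : resid p (a_s p k0 s' + s'%:Z) = s%:Z - 1 by rewrite ha /resid; apply: (@modz_char _ _ 1); lia.
have hd : delta_s p k0 s' = 1 by rewrite /delta_s hr; apply: (@divz_char _ (k0%:Z - 2)); lia.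
by split=> //; rewrite /t1 /t2 ?hr hd ha; case: ifP => [h|/negbT h]; lia.
Qed.

Theorem mainTheorem6 (R : comNzRingType) (w : nat -> R) (p k0 : nat) :
  prime p -> (7 <= p)%N -> (2 <= k0 <= p)%N ->
  (forall s : nat, (s <= (k0 - 2)./2)%N -> (k0 - 1 - s <= p - 2)%N ->
     G_dag w p k0 s = G_dag w p k0 (k0 - 1 - s)) /\
  (forall s : nat, (k0 <= s <= (k0 - 2 + (p - 1))./2)%N ->
     G_dag w p k0 s = G_dag w p k0 (k0 + (p - 1) - 1 - s)).
Proof.
move=> _ p7 hk; have p2 : (2 <= p)%N by lia.
split.
- move=> s; rewrite geq_half_double -mul2n => hs hs'.
  apply: G_eq => // j.
  have [a b c] := L1a p2 hk hs.
  rewrite (dud_form j a b c).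
  case: (posnP s) => [s0|s1].
  + subst s; rewrite subn0.
    have hk' : (2 <= k0 < p)%N by lia.
    have [a' b' c'] := L1c p2 hk'.
    rewrite (dud_form j a' b' c').
    have E : (j%:Z - (p.+1)%:Z) = (-1) * (p.+1)%:Z + j%:Z by ring.
    rewrite E divzMDl; last by [].
    rewrite !subr0; ring.
  + have [a' b' c'] := L1b p2 hk hs s1.
    by rewrite (dud_form j a' b' c').
- move=> s /andP[hs1]; rewrite geq_half_double -mul2n => hs2.
  apply: G_eq => // j.
  have [a b c] := L2a p2 hk hs1 hs2.
  have [a' b' c'] := L2b p2 hk hs1 hs2.
  by rewrite (dud_form j a b c) (dud_form j a' b' c').
Qed.
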